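(* Let $n,m\ge 4$ be integers with $n\equiv 0\pmod 4$ and $m\equiv 0 \pmod 4$. Then $\gamma_t(C_n\times C_m)=\gamma_p(C_n\times C_m)=\frac{nm}{4}$.
   Context: All graphs are finite, simple and undirected. $C_n$ denotes the cycle of order $n$ and $G\times H$ the Cartesian product of graphs. For a graph $G$ without isolated vertices: a set $D\subseteq V(G)$ is a total dominating set if every vertex of $G$ (including those in $D$) has a neighbour in $D$; $\gamma_t(G)$ is the minimum size of a total dominating set. A set $D\subseteq V(G)$ is a paired dominating set if every vertex outside $D$ has a neighbour in $D$ and the induced subgraph $G[D]$ has a perfect matching; $\gamma_p(G)$ is the minimum size of a paired dominating set. *)

(* Defs.v *)
From mathcomp Require Import all_boot.
Set Implicit Arguments. Unset Strict Implicit. Unset Printing Implicit Defensive.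

(* A (simple, undirected) graph on a finite vertex type T is given by an
   adjacency relation adj : rel T (assumed symmetric and irreflexive where
   relevant; the cycle products below are). *)

Definition cycle_adj (n : nat) : rel 'I_n :=
  fun i j => (j == (i.+1 %% n) :> nat) || (i == (j.+1 %% n) :> nat).

Definition cart_adj (T U : finType) (a : rel T) (b : rel U) : rel (T * U) :=
  fun x y => ((x.1 == y.1) && b x.2 y.2) || (a x.1 y.1 && (x.2 == y.2)).

Definition Cnm_adj (n m : nat) : rel ('I_n * 'I_m) :=
  cart_adj (@cycle_adj n) (@cycle_adj m).

Section Dom.
Variables (T : finType) (adj : rel T).

Definition total_dominating (D : {set T}) : bool :=
  [forall v, [exists u in D, adj v u]].

Definition dominating_outside (D : {set T}) : bool :=
  [forall v, (v \notin D) ==> [exists u in D, adj v u]].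

(* G[D] has a perfect matching, encoded as the partner map f: on D, f is an
   involution sending each vertex to an adjacent vertex of D (adj being
   irreflexive, f v <> v, so the pairs {v, f v} partition D into edges). *)
Definition perfect_matching_induced (D : {set T}) : Prop :=
  exists f : T -> T,
    forall v, v \in D -> [/\ f v \in D, adj v (f v) & f (f v) = v].

Definition paired_dominating (D : {set T}) : Prop :=
  dominating_outside D /\ perfect_matching_induced D.

Definition is_gamma_t (k : nat) : Prop :=
  (exists D : {set T}, total_dominating D /\ #|D| = k) /\
  (forall D : {set T}, total_dominating D -> k <= #|D|).

Definition is_gamma_p (k : nat) : Prop :=
  (exists D : {set T}, paired_dominating D /\ #|D| = k) /\
  (forall D : {set T}, paired_dominating D -> k <= #|D|).

End Dom.

(* Main.v *)
Require Import Defs.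
From mathcomp Require Import all_boot zify.
Set Implicit Arguments. Unset Strict Implicit.

Lemma card_bigcup_le (I T : finType) (D : {pred I}) (F : I -> {set T}) :
  #|\bigcup_(i in D) F i| <= \sum_(i in D) #|F i|.
Proof.
apply: (big_ind2 (fun (A : {set T}) (k : nat) => #|A| <= k)).
- by rewrite cards0.
- move=> A a B b Ha Hb; apply: leq_trans (leq_card_setU A B) _; exact: leq_add.
- by [].
Qed.

Lemma cyc_S n (i : 'I_n) : cycle_adj i (ordS i).
Proof. by rewrite /cycle_adj /= eqxx. Qed.

Lemma cyc_P n (i : 'I_n) : cycle_adj i (ord_pred i).
Proof.
rewrite /cycle_adj; apply/orP; right.
by have := congr1 val (ord_predK i) => /= ->.
Qed.

Lemma cyc_inv n (i j : 'I_n) : cycle_adj i j -> i = ord_pred j \/ i = ordS j.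
Proof.
case/orP=> /eqP H.
- left; have -> : j = ordS i by apply: val_inj.
  by rewrite ordSK.
- by right; apply: val_inj.
Qed.

Lemma modS4 n (i : 'I_n) : n %% 4 = 0 -> ordS i %% 4 = (i %% 4 + 1) %% 4.
Proof.
move=> H; rewrite /= modn_dvdm; last by apply/eqP.
lia.
Qed.

Lemma modP4 n (i : 'I_n) : n %% 4 = 0 -> ord_pred i %% 4 = (i %% 4 + 3) %% 4.
Proof.
move=> H; rewrite /= modn_dvdm; last by apply/eqP.
have := ltn_ord i; lia.
Qed.

Definition nbrs n m (u : 'I_n * 'I_m) : {set 'I_n * 'I_m} :=
  [set (u.1, ordS u.2); (u.1, ord_pred u.2); (ordS u.1, u.2); (ord_pred u.1, u.2)].

Lemma card_nbrs n m (u : 'I_n * 'I_m) : #|nbrs u| <= 4.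
Proof.
set s := [:: (u.1, ordS u.2); (u.1, ord_pred u.2); (ordS u.1, u.2); (ord_pred u.1, u.2)].
have -> : nbrs u = [set z in s].
  by apply/setP => z; rewrite !inE !orbA.
apply: leq_trans _ (card_size s); apply: subset_leq_card.
by apply/subsetP => z; rewrite inE.
Qed.

Lemma adj_nbrs n m (u v : 'I_n * 'I_m) : Cnm_adj v u -> v \in nbrs u.
Proof.
case: v u => [x y] [x' y']; rewrite /Cnm_adj /cart_adj /= /nbrs !inE.
case/orP=> /andP [H1 H2].
- move/eqP: H1 => ->; case: (cyc_inv H2) => ->; by rewrite !eqxx ?orbT.
- move/eqP: H2 => ->; case: (cyc_inv H1) => ->; by rewrite !eqxx ?orbT.
Qed.

Lemma lower n m (D : {set 'I_n * 'I_m}) :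
  total_dominating (@Cnm_adj n m) D -> n * m <= 4 * #|D|.
Proof.
move=> /forallP HD.
have -> : n * m = #|[set: 'I_n * 'I_m]| by rewrite cardsT card_prod !card_ord.
have sub : [set: 'I_n * 'I_m] \subset \bigcup_(u in D) nbrs u.
  apply/subsetP => v _; have /existsP [u /andP [uD Hu]] := HD v.
  apply/bigcupP; exists u => //; exact: adj_nbrs.
apply: leq_trans (subset_leq_card sub) _.
apply: leq_trans (card_bigcup_le _ _) _.
rewrite mulnC -sum_nat_const; apply: leq_sum => u _; exact: card_nbrs.
Qed.

Definition Pm (a b : nat) := ((b == 0) && (a < 2)) || ((b == 2) && (2 <= a)).

Lemma key a b : a < 4 -> b < 4 ->
  [|| Pm ((a + 1) %% 4) b, Pm ((a + 3) %% 4) b, Pm a ((b + 1) %% 4) | Pm a ((b + 3) %% 4)].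
Proof. by case: a => [|[|[|[|]]]] // _; case: b => [|[|[|[|]]]]. Qed.

Definition D0 n m : {set 'I_n * 'I_m} := [set v : 'I_n * 'I_m | Pm (v.1 %% 4) (v.2 %% 4)].

Lemma D0_td n m : n %% 4 = 0 -> m %% 4 = 0 -> total_dominating (@Cnm_adj n m) (D0 n m).
Proof.
move=> Hn Hm; apply/forallP => [[x y]].
have := key (ltn_pmod x (isT : 0 < 4)) (ltn_pmod y (isT : 0 < 4)).
rewrite /Cnm_adj /cart_adj.
case/or4P => H; apply/existsP.
- exists (ordS x, y); rewrite inE /= modS4 // H cyc_S eqxx; by rewrite orbT.
- exists (ord_pred x, y); rewrite inE /= modP4 // H cyc_P eqxx; by rewrite orbT.
- exists (x, ordS y); rewrite inE /= modS4 // H cyc_S eqxx; by [].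
- exists (x, ord_pred y); rewrite inE /= modP4 // H cyc_P eqxx; by [].
Qed.

Definition partner n (x : 'I_n) := if odd (x %% 4) then ord_pred x else ordS x.

Lemma D0_pm n m : n %% 4 = 0 -> perfect_matching_induced (@Cnm_adj n m) (D0 n m).
Proof.
move=> Hn; exists (fun v => (partner v.1, v.2)) => [[x y]]; rewrite !inE /= => Hv.
have xl := ltn_pmod x (isT : 0 < 4).
split.
- rewrite /partner; case: ifP => Ho; rewrite ?modS4 ?modP4 //; move: Ho Hv xl;
  by case: (x %% 4) => [|[|[|[|]]]]; case: (y %% 4) => [|[|[|[|]]]].
- by rewrite /Cnm_adj /cart_adj /partner /=; case: ifP => _; rewrite ?cyc_S ?cyc_P eqxx orbT.
- suff -> : partner (partner x) = x by [].
  rewrite /partner; case Ho: (odd (x %% 4)).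
  + have -> : odd (ord_pred x %% 4) = false.
      by rewrite modP4 //; move: Ho xl; case: (x %% 4) => [|[|[|[|]]]].
    exact: ord_predK.
  + have -> : odd (ordS x %% 4) = true.
      by rewrite modS4 //; move: Ho xl; case: (x %% 4) => [|[|[|[|]]]].
    exact: ordSK.
Qed.

Lemma D0_card n m : 4 <= n -> 4 <= m -> n %% 4 = 0 -> m %% 4 = 0 ->
  #|D0 n m| <= n * m %/ 4.
Proof.
move=> n4 m4 Hn Hm.
pose h (v : 'I_n * 'I_m) :=
  ((inord (v.1 %/ 4 * 2 + v.1 %% 2) : 'I_(n %/ 2).-1.+1),
   (inord (v.2 %/ 2) : 'I_(m %/ 2).-1.+1)).
have hinj : {in D0 n m &, injective h}.
  move=> [x y] [x' y']; rewrite !inE /= => Hv Hw /eqP.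
  rewrite /h /= xpair_eqE => /andP [/eqP E1 /eqP E2].
  have := congr1 (@nat_of_ord _) E1; have := congr1 (@nat_of_ord _) E2.
  have xl := ltn_ord x; have xl' := ltn_ord x'; have yl := ltn_ord y; have yl' := ltn_ord y'.
  rewrite !inordK; try lia.
  move=> F2 F1.
  have ex : x = x' :> nat.
    move: Hv Hw; rewrite /Pm => /orP [/andP[/eqP ? ?]|/andP[/eqP ? ?]] /orP [/andP[/eqP ? ?]|/andP[/eqP ? ?]]; lia.
  have ey : y = y' :> nat.
    move: Hv Hw; rewrite /Pm => /orP [/andP[/eqP ? ?]|/andP[/eqP ? ?]] /orP [/andP[/eqP ? ?]|/andP[/eqP ? ?]]; lia.
  by congr (_, _); apply: val_inj.
rewrite -(card_in_imset hinj).
apply: leq_trans (max_card _) _.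
rewrite card_prod !card_ord.
have [a Ea] : exists a, n = 4 * a by exists (n %/ 4); lia.
have [b Eb] : exists b, m = 4 * b by exists (m %/ 4); lia.
subst n m.
have -> : 4 * a %/ 2 = 2 * a by lia.
have -> : 4 * b %/ 2 = 2 * b by lia.
have -> : 4 * a * (4 * b) %/ 4 = 4 * (a * b) by rewrite -mulnA mulKn // mulnCA.
have a1 : 0 < a by lia.
have b1 : 0 < b by lia.
rewrite !prednK ?muln_gt0 //; nia.
Qed.

Theorem lemma2p3 (n m : nat) :
  4 <= n -> 4 <= m -> n %% 4 = 0 -> m %% 4 = 0 ->
  is_gamma_t (@Cnm_adj n m) (n * m %/ 4) /\
  is_gamma_p (@Cnm_adj n m) (n * m %/ 4).
Proof.
move=> n4 m4 Hn Hm.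
have low : forall D, total_dominating (@Cnm_adj n m) D -> n * m %/ 4 <= #|D|.
  move=> D /lower H; have := leq_div2r 4 H; by rewrite mulKn.
have ptd : forall D, paired_dominating (@Cnm_adj n m) D -> total_dominating (@Cnm_adj n m) D.
  move=> D [Ho [f Hf]]; apply/forallP => v.
  case: (boolP (v \in D)) => vD.
  - by have [H1 H2 _] := Hf v vD; apply/existsP; exists (f v); rewrite H1 H2.
  - exact: (implyP (forallP Ho v) vD).
have td := D0_td Hn Hm.
have eq : #|D0 n m| = n * m %/ 4.
  by apply/eqP; rewrite eqn_leq D0_card // low.
split; split.
- by exists (D0 n m).
- exact: low.
- exists (D0 n m); split => //; split; last exact: D0_pm.
  apply/forallP => v; apply/implyP => _; exact: (forallP td v).
- move=> D /ptd; exact: low.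
Qed.
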